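(* Let $H$ be a finite abelian group and $k$ a positive integer. Suppose that for infinitely many primes $p$, every non-zero sum subset of size $k$ of $(\mathbb{Z}_p \times H) \setminus \{0_{\mathbb{Z}_p\times H}\}$ is sequenceable. Then for every torsion-free abelian group $G$, every non-zero sum subset of size $k$ of $(G \times H) \setminus \{0_{G\times H}\}$ is sequenceable.
   Context: For a finite subset $S$ of an abelian group with $|S| = k$, an ordering $(x_1,\dots,x_k)$ of $S$ has partial sums $(y_0,\dots,y_k)$ with $y_0 = 0$, $y_i = x_1+\cdots+x_i$. It is a sequencing if the $y_i$ are pairwise distinct, and a rotational sequencing if they are pairwise distinct except that $y_k = y_0 = 0$; $S$ is sequenceable if it has one or the other. $S$ is non-zero sum if the sum of its elements is nonzero. *)

(* Defs.v *)
From HB Require Import structures.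
From mathcomp Require Import all_boot all_order all_algebra.
Set Implicit Arguments. Unset Strict Implicit. Unset Printing Implicit Defensive.
Import GRing.Theory.
Local Open Scope ring_scope.

Definition psums (G : zmodType) (t : seq G) : seq G :=
  [seq \sum_(x <- take i t) x | i <- iota 0 (size t).+1].

Definition is_sequencing (G : zmodType) (t : seq G) : bool :=
  uniq (psums t).

Definition is_rot_sequencing (G : zmodType) (t : seq G) : bool :=
  uniq (take (size t) (psums t)) && (last 0 (psums t) == 0).

(* a finite subset S (given as a duplicate-free list) is sequenceable if some
   ordering of S is a sequencing or a rotational sequencing *)
Definition sequenceable (G : zmodType) (s : seq G) : Prop :=
  exists t : seq G, perm_eq s t /\ (is_sequencing t \/ is_rot_sequencing t).

Definition nonzero_sum (G : zmodType) (s : seq G) : bool :=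
  \sum_(x <- s) x != 0.

Definition torsion_free (G : zmodType) : Prop :=
  forall (x : G) (n : nat), x *+ n.+1 = 0 -> x = 0.

(* Main.v *)
From HB Require Import structures.
Require Import Defs.
From mathcomp Require Import all_boot all_order all_algebra.
Import Order.TTheory GRing.Theory Num.Theory.
Local Open Scope ring_scope.

Lemma common_den (I : finType) (q : I -> rat) :
  exists d : nat, (0 < d)%N /\ exists c : I -> int, forall i, (c i)%:~R = d%:R * q i.
Proof.
pose F i := `|denq (q i)|%N.
have Fpos i : (0 < F i)%N by rewrite /F absz_gt0 gt_eqF ?denq_gt0.
exists (\prod_i F i)%N; split; first exact: prodn_gt0.
exists (fun i => numq (q i) * ((\prod_(j | j != i) F j)%N)%:Z).
move=> i; rewrite [in RHS](bigD1 i) //= intrM numqE natrM.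
have -> : ((F i)%:R : rat) = (denq (q i))%:~R.
  by rewrite /F -[X in _ = X%:~R]gez0_abs ?ltW ?denq_gt0.
by rewrite -pmulrn [RHS]mulrC mulrA.
Qed.

Lemma le_sum_mem (T : eqType) (l : seq T) (F : T -> rat) x :
  (forall y, 0 <= F y) -> x \in l -> F x <= \sum_(y <- l) F y.
Proof.
move=> F0; elim: l => // y l IH; rewrite in_cons big_cons => /orP [/eqP->|/IH h].
  by rewrite lerDl sumr_ge0.
by rewrite (le_trans h) // lerDr.
Qed.

Lemma avoid (k : nat) (ws : seq 'rV[rat]_k) :
  all (fun w => w != 0) ws -> exists z : 'cV[rat]_k, all (fun w => (w *m z) 0 0 != 0) ws.
Proof.
elim: ws => [|w ws IH] /=; first by exists 0.
case/andP=> wn0 /IH [z hz].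
have [wz|wz] := eqVneq ((w *m z) 0 0) 0; last by exists z; rewrite /= wz.
have [j wj] : exists j, w 0 j != 0.
  apply/existsP; apply: contraR wn0 => /existsPn h; apply/eqP/rowP => j.
  by rewrite mxE; apply/eqP; rewrite (negPn (h j)).
pose e : 'cV[rat]_k := delta_mx j 0.
have ve (v : 'rV[rat]_k) : (v *m e) 0 0 = v 0 j by rewrite -colE mxE.
pose t : rat := 1 + \sum_(v <- ws) `|(v *m z) 0 0 / v 0 j|.
have t0 : 0 < t by rewrite ltr_wpDr ?ltr01 // sumr_ge0.
have vz' (v : 'rV[rat]_k) : (v *m (z + t *: e)) 0 0 = (v *m z) 0 0 + t * v 0 j.
  by rewrite -ve mulmxDr -scalemxAr !mxE.
exists (z + t *: e); rewrite /= vz' wz add0r mulf_neq0 ?(gt_eqF t0) //=.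
apply/allP=> v vin; rewrite vz'.
have vz0 := allP hz v vin; rewrite /= in vz0.
have [c0|c0] := eqVneq (v 0 j) 0; first by rewrite c0 mulr0 addr0.
apply/negP=> /eqP h.
have tE : t = - ((v *m z) 0 0 / v 0 j).
  by apply: (mulIf c0); rewrite mulNr mulfVK //; apply/eqP; rewrite -addr_eq0 addrC h.
have : `|(v *m z) 0 0 / v 0 j| < t.
  rewrite /t ltr_pwDl ?ltr01 //.
  apply: (@le_sum_mem _ ws (fun v : 'rV[rat]_k => `|(v *m z) 0 0 / v 0 j|)) => // y.
by rewrite tE ltNge -normrN ler_norm.
Qed.

Definition eps {k} (I J : {set 'I_k}) (i : 'I_k) : int := (i \in I)%:Z - (i \in J)%:Z.

Lemma sum_eps (M : zmodType) k (F : 'I_k -> M) (I J : {set 'I_k}) :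
  \sum_(i in I) F i - \sum_(i in J) F i = \sum_i F i *~ eps I J i.
Proof.
rewrite /eps; under [RHS]eq_bigr do rewrite mulrzBr.
rewrite sumrB; congr (_ - _); rewrite big_mkcond; apply: eq_bigr => i _.
  by case: (i \in I).
by case: (i \in J).
Qed.

Lemma key (G : zmodType) (tf : torsion_free G) (k : nat) (g : 'I_k -> G) :
  exists b : 'I_k -> int, forall I J : {set 'I_k},
   (\sum_(i in I) g i == \sum_(i in J) g i) = (\sum_(i in I) b i == \sum_(i in J) b i).
Proof.
pose T : finType := ({set 'I_k} * {set 'I_k})%type.
pose vec (IJ : T) : 'rV[rat]_k := \row_i (eps IJ.1 IJ.2 i)%:~R.
pose gs (IJ : T) := \sum_(i in IJ.1) g i - \sum_(i in IJ.2) g i.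
pose rel := [seq IJ <- enum T | gs IJ == 0].
pose n := size rel.
pose d0 : T := (set0, set0).
pose A : 'M[rat]_(n, k) := \matrix_(r < n, i < k) (eps (nth d0 rel r).1 (nth d0 rel r).2 i)%:~R.
pose B := cokermx A.
have relP (r : 'I_n) : gs (nth d0 rel r) = 0.
  have : nth d0 rel r \in rel by apply: mem_nth.
  by rewrite mem_filter => /andP [/eqP].
have claim1 IJ : gs IJ != 0 -> vec IJ *m B != 0.
  move=> h; apply: contra h => /eqP h0.
  have : (vec IJ <= A)%MS by rewrite submxE h0.
  case/submxP => D hD.
  have [d [dpos [c hc]]] := @common_den _ (fun r : 'I_n => D 0 r).
  have hint i : eps IJ.1 IJ.2 i * d%:Z = \sum_r c r * eps (nth d0 rel r).1 (nth d0 rel r).2 i.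
    apply: (@intr_inj rat); rewrite intrM rmorph_sum /=.
    have := congr1 (fun M : 'rV[rat]_k => M 0 i) hD; rewrite !mxE => ->.
    rewrite mulr_suml; apply: eq_bigr => r _; rewrite !mxE intrM hc.
    by rewrite -pmulrn mulrC mulrA.
  have : gs IJ *~ d%:Z = 0.
    rewrite /gs sum_eps mulrz_suml.
    under eq_bigr do rewrite -mulrzA hint mulrz_sumr.
    rewrite exchange_big /= big1 // => r _.
    under eq_bigr do rewrite mulrC mulrzA.
    by rewrite -mulrz_suml -sum_eps; move: (relP r); rewrite /gs => ->; rewrite mul0rz.
  case: d dpos {hint hc} => // d _ h.
  by apply/eqP; apply: (tf _ d h).
have hall : all (fun w => w != 0) [seq vec IJ *m B | IJ <- enum T & gs IJ != 0].
  apply/allP => w /mapP [IJ]; rewrite mem_filter => /andP [h _] ->.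
  by apply: claim1.
have [z hz] := @avoid _ _ hall.
pose a := B *m z.
have claim3 IJ : (gs IJ == 0) = ((vec IJ *m a) 0 0 == 0).
  have [h|h] := eqVneq (gs IJ) 0.
    have hin : IJ \in rel by rewrite mem_filter h eqxx mem_enum.
    have rlt : (index IJ rel < n)%N by rewrite index_mem.
    have -> : vec IJ = row (Ordinal rlt) A.
      by apply/rowP => i; rewrite !mxE /= nth_index.
    by rewrite /a mulmxA -row_mul mulmx_coker row0 mul0mx mxE eqxx.
  rewrite /a mulmxA; apply/esym/negbTE.
  apply: (allP hz); apply/mapP; exists IJ => //.
  by rewrite mem_filter h mem_enum.
have vecaE IJ : (vec IJ *m a) 0 0 = \sum_i (eps IJ.1 IJ.2 i)%:~R * a i 0.
  by rewrite mxE; apply: eq_bigr => i _; rewrite mxE.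
have [d [dpos [c hc]]] := @common_den _ (fun i => a i 0).
exists c => I J.
rewrite -subr_eq0 -[in RHS]subr_eq0.
have -> : \sum_(i in I) g i - \sum_(i in J) g i = gs (I, J) by [].
rewrite claim3 vecaE /= sum_eps.
under [X in _ = (X == 0)]eq_bigr do rewrite mulrzz.
rewrite -(intr_eq0 rat) rmorph_sum /=.
under [X in _ = (X == 0)]eq_bigr do rewrite intrM hc -mulrA.
rewrite -mulr_sumr mulf_eq0 pnatr_eq0 (gtn_eqF dpos) /=.
by under [X in _ = (X == 0)]eq_bigr do rewrite mulrC.
Qed.

Lemma Zp_int_eq0 p (z : int) : prime p -> (`|z| < p)%N -> ((z%:~R : 'Z_p) == 0) = (z == 0).
Proof.
move=> pp; have p1 := prime_gt1 pp.
have natE n : (n < p)%N -> ((n%:R : 'Z_p) == 0) = (n == 0%N).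
  move=> np; apply/eqP/eqP => [h|->]; last by [].
  by have := val_Zp_nat p1 n; rewrite h /= modn_small.
case: z => n /= hn; first by rewrite natE.
rewrite NegzE rmorphN /= oppr_eq0 natE //.
Qed.

Lemma sum_le_all k (b : 'I_k -> int) (I : {set 'I_k}) :
  `|\sum_(i in I) b i| <= \sum_i `|b i|.
Proof.
apply: (le_trans (ler_norm_sum _ _ _)).
rewrite [X in _ <= X](bigID (fun i => i \in I)) /= lerDl sumr_ge0 //.
Qed.

Lemma modp_lemma k (b : 'I_k -> int) p : prime p -> 2 * \sum_i `|b i| < p%:Z ->
  forall I J : {set 'I_k}, (\sum_(i in I) ((b i)%:~R : 'Z_p) == \sum_(i in J) (b i)%:~R)
     = (\sum_(i in I) b i == \sum_(i in J) b i).
Proof.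
move=> pp hp I J; rewrite -subr_eq0 -[RHS]subr_eq0.
rewrite -!rmorph_sum -rmorphB /= Zp_int_eq0 //.
rewrite -(ltr_nat int) natr_absz intz natz (le_lt_trans _ hp) //.
apply: (le_trans (ler_normB _ _)).
by rewrite mulr2n mulrDl mul1r lerD ?sum_le_all.
Qed.

Lemma uniq_map_iff (T A B : eqType) (F : T -> A) (F' : T -> B) (l : seq T) :
  {in l &, forall a b, (F a == F b) = (F' a == F' b)} -> uniq (map F l) = uniq (map F' l).
Proof.
elim: l => // a l IH h /=.
rewrite IH; last by move=> u v ul vl; apply: h; rewrite in_cons ?ul ?vl orbT.
congr (~~ _ && _).
rewrite -!has_pred1 !has_map; apply: eq_in_has => u ul /=.
by rewrite eq_sym h ?in_cons ?eqxx ?ul ?orbT // eq_sym.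
Qed.

Lemma last_iota1 m n : last m (iota m.+1 n) = (m + n)%N.
Proof. by elim: n m => [|n IH] m /=; rewrite ?addn0 // IH addSnnS. Qed.

Lemma last_map_iota (T : Type) (x0 : T) (F : nat -> T) n :
  last x0 (map F (iota 0%N n.+1)) = F n.
Proof. by rewrite /= (last_map F _ 0%N) last_iota1. Qed.

Lemma psums_map (A : zmodType) (x : nat -> A) (s : seq nat) :
  psums (map x s) = [seq \sum_(i <- take n s) x i | n <- iota 0 (size s).+1].
Proof. by rewrite /psums size_map; apply: eq_map => n; rewrite -map_take big_map. Qed.

Definition Pprop {A B : zmodType} (x : nat -> A) (y : nat -> B) k :=
  forall r1 r2 : seq nat, uniq r1 -> uniq r2 -> {subset r1 <= iota 0 k} ->
    {subset r2 <= iota 0 k} ->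
    (\sum_(i <- r1) x i == \sum_(i <- r2) x i) = (\sum_(i <- r1) y i == \sum_(i <- r2) y i).

Lemma transfer (A B : zmodType) (x : nat -> A) (y : nat -> B) k :
  Pprop x y k -> sequenceable (map y (iota 0 k)) -> sequenceable (map x (iota 0 k)).
Proof.
move=> hP [t' [hperm hseq]].
have := hperm; rewrite perm_sym; case/(perm_iotaP 0) => Is hIs ht'.
rewrite size_map size_iota in hIs.
have Isk : {subset Is <= iota 0 k} by move=> i; rewrite (perm_mem hIs).
have uIs : uniq Is by rewrite (perm_uniq hIs) iota_uniq.
have ht2 : t' = map y Is.
  rewrite ht'; apply/eq_in_map => i /Isk; rewrite mem_iota add0n => /andP [_ ik].
  by rewrite (nth_map 0%N) ?size_iota // nth_iota.
rewrite ht2 in hseq.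
exists (map x Is); split; first by apply: perm_map; rewrite perm_sym.
pose Fx n := \sum_(i <- take n Is) x i.
pose Fy n := \sum_(i <- take n Is) y i.
have hF n m : (Fx n == Fx m) = (Fy n == Fy m).
  apply: hP; rewrite ?take_uniq // => i /mem_take; exact: Isk.
case: hseq => [hs|hr]; [left|right].
  move: hs; rewrite /is_sequencing !psums_map.
  by rewrite (@uniq_map_iff _ _ _ Fx Fy) // => u v _ _.
move: hr; rewrite /is_rot_sequencing !psums_map !size_map -!map_take take_iota.
rewrite !last_map_iota.
rewrite (@uniq_map_iff _ _ _ Fx Fy); last by move=> u v _ _.
have Fx0 : Fx 0%N = 0 by rewrite /Fx take0 big_nil.
have Fy0 : Fy 0%N = 0 by rewrite /Fy take0 big_nil.
rewrite -[X in Fx _ == X]Fx0 -[X in Fy _ == X]Fy0 hF.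
by [].
Qed.

Lemma Pprop_props (A B : zmodType) (x : nat -> A) (y : nat -> B) k : Pprop x y k ->
  [/\ uniq (map x (iota 0 k)) = uniq (map y (iota 0 k)),
      (0 \in map x (iota 0 k)) = (0 \in map y (iota 0 k)) &
      nonzero_sum (map x (iota 0 k)) = nonzero_sum (map y (iota 0 k))].
Proof.
move=> hP.
have s1 a : a \in iota 0 k -> {subset [:: a] <= iota 0 k}.
  by move=> ai u; rewrite inE => /eqP->.
have s0 : {subset [::] <= iota 0 k} by [].
split.
- apply: uniq_map_iff => a b ai bi.
  by have := hP [:: a] [:: b] isT isT (s1 a ai) (s1 b bi); rewrite !big_seq1.
- rewrite -!has_pred1 !has_map; apply: eq_in_has => a ai /=.
  by have := hP [:: a] [::] isT isT (s1 a ai) s0; rewrite !big_seq1 !big_nil eq_sym => ->; rewrite eq_sym.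
- rewrite /nonzero_sum !big_map.
  by have := hP (iota 0 k) [::] (iota_uniq _ _) isT (fun u h => h) s0; rewrite !big_nil => ->.
Qed.

Lemma bridge (M : zmodType) k (F : nat -> M) (r : seq nat) :
  uniq r -> {subset r <= iota 0 k} ->
  \sum_(i <- r) F i = \sum_(i in [set j : 'I_k | val j \in r]) F (val i).
Proof.
move=> ur sr.
rewrite (eq_bigl (fun i : 'I_k => val i \in r)); last by move=> i; rewrite inE.
rewrite -(big_mkord (fun i => i \in r) F) -big_filter.
apply: perm_big; apply: uniq_perm => //; first by rewrite filter_uniq ?iota_uniq.
move=> i; rewrite mem_filter; have := sr i; rewrite /index_iota subn0; case: (i \in r) => //= -> //.
Qed.

Lemma sum_pair (M1 M2 : zmodType) (r : seq nat) (F : nat -> M1 * M2) :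
  \sum_(i <- r) F i = (\sum_(i <- r) (F i).1, \sum_(i <- r) (F i).2).
Proof. by elim: r => [|a r IH]; rewrite ?big_nil ?big_cons // IH; case: (F a). Qed.

Theorem corollary4p5 (H : finZmodType) (k : nat) (hk : (0 < k)%N) :
  (forall N : nat, exists p : nat, (N < p)%N /\ prime p /\
     forall s : seq ('Z_p * H)%type,
       uniq s -> size s = k -> 0 \notin s -> nonzero_sum s -> sequenceable s) ->
  forall G : zmodType, torsion_free G ->
  forall s : seq (G * H)%type,
    uniq s -> size s = k -> 0 \notin s -> nonzero_sum s -> sequenceable s.
Proof.
move=> hyp G tf s us ss s0 snz.
pose x n := nth 0 s n.
have sE : s = map x (iota 0 k) by rewrite -ss; exact/esym/mkseq_nth.
case: k hk hyp ss sE => // k _ hyp ss sE.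
pose g (i : 'I_k.+1) := (x i).1.
have [b hb] := @key G tf _ g.
have [p [Np [pp hp]]] := hyp (absz (2 * \sum_i `|b i|)).
have bound : 2 * \sum_i `|b i| < p%:Z.
  have X0 : 0 <= 2 * \sum_i `|b i| by rewrite mulr_ge0 // sumr_ge0.
  move: Np; rewrite -(ltr_nat int) natr_absz intz ger0_norm // => h; apply: (lt_le_trans h). rewrite le_eqVlt; apply/orP; left; apply/eqP; exact: natz.
have ha := @modp_lemma _ b p pp bound.
pose y n : ('Z_p * H)%type := ((b (inord n))%:~R, (x n).2).
have hP : Pprop x y k.+1.
  move=> r1 r2 u1 u2 h1 h2.
  rewrite !sum_pair !xpair_eqE /=; congr (_ && _).
  rewrite (@bridge _ _ (fun n => (x n).1) _ u1 h1) (@bridge _ _ (fun n => (x n).1) _ u2 h2).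
  rewrite (@bridge _ _ (fun n => ((b (inord n))%:~R : 'Z_p)) _ u1 h1).
  rewrite (@bridge _ _ (fun n => ((b (inord n))%:~R : 'Z_p)) _ u2 h2) /=.
  have E (S : {set 'I_k.+1}) : \sum_(i in S) ((b (inord i))%:~R : 'Z_p) = \sum_(i in S) (b i)%:~R.
    by apply: eq_bigr => i _; rewrite inord_val.
  by rewrite !E ha -hb.
have [e1 e2 e3] := @Pprop_props _ _ _ _ _ hP.
rewrite sE; apply: (@transfer _ _ _ _ _ hP).
apply: hp.
- by rewrite -e1 -sE.
- by rewrite size_map size_iota.
- by rewrite -e2 -sE.
- by rewrite -e3 -sE.
Qed.
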